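(* For the $N$-relay 1-2-1 diamond network with relays operating in FD, the linear program $\mathrm{P1^d}$ (with $\mathsf C_p=\min\{\ell_{p,0},\ell_{N+1,p}\}$) has an optimal solution $(x_1,\dots,x_N)$ with at most $2$ indices $p$ such that $x_p>0$. Hence the FD approximate capacity $\mathsf{C}_{\rm cs,iid}$ is achieved by activating at most two relays, independently of $N$.
   Context: Diamond network: nodes $[0:N+1]$, source $0$, destination $N+1$, relays $[1:N]$; the only links are $(0,p)$ and $(p,N+1)$ for $p\in[1:N]$, with positive rational capacities $\ell_{p,0}$ and $\ell_{N+1,p}$. $\mathrm{P1^d}$ is the linear program $\max\sum_{p=1}^N x_p\mathsf C_p$ subject to $0\le x_p\le1$ for all $p\in[1:N]$, $\sum_{p=1}^N x_p\mathsf C_p/\ell_{p,0}\le1$, and $\sum_{p=1}^N x_p\mathsf C_p/\ell_{N+1,p}\le1$. In the FD case its optimal value equals $\mathsf{C}_{\rm cs,iid}$, the FD approximate capacity $\max_\lambda\min_\Omega\sum_{i\in\Omega,j\in\Omega^c}(\sum_{s:\,(i,j)\text{ active in }s}\lambda_s)\ell_{j,i}$ over probability vectors on FD beam states and cuts $0\in\Omega\subseteq[0:N]$. *)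

(* Defs.v *)
From HB Require Import structures.
From mathcomp Require Import all_boot all_order all_algebra.
Set Implicit Arguments. Unset Strict Implicit. Unset Printing Implicit Defensive.
Import Order.TTheory GRing.Theory Num.Theory.
Local Open Scope ring_scope.

(* Relays p in [1:N] are indexed by 'I_N.
   l0 p  = ell_{p,0}   (capacity of link source -> relay p)
   l1 p  = ell_{N+1,p} (capacity of link relay p -> destination) *)

Definition Cp (N : nat) (l0 l1 : 'I_N -> rat) (p : 'I_N) : rat :=
  Num.min (l0 p) (l1 p).

Definition P1d_obj (N : nat) (l0 l1 : 'I_N -> rat) (x : 'I_N -> rat) : rat :=
  \sum_(p < N) x p * Cp l0 l1 p.

Definition P1d_feasible (N : nat) (l0 l1 : 'I_N -> rat) (x : 'I_N -> rat) : Prop :=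
  [/\ forall p : 'I_N, 0 <= x p <= 1,
      \sum_(p < N) x p * Cp l0 l1 p / l0 p <= 1
    & \sum_(p < N) x p * Cp l0 l1 p / l1 p <= 1].

Definition P1d_optimal (N : nat) (l0 l1 : 'I_N -> rat) (x : 'I_N -> rat) : Prop :=
  P1d_feasible l0 l1 x /\
  forall y : 'I_N -> rat, P1d_feasible l0 l1 y -> P1d_obj l0 l1 y <= P1d_obj l0 l1 x.

(* Main.v *)
Require Import Defs.
From HB Require Import structures.
From mathcomp Require Import all_boot all_order all_algebra.
From mathcomp Require Import ring lra.
From Stdlib Require Import Classical.
Set Implicit Arguments. Unset Strict Implicit. Unset Printing Implicit Defensive.
Import Order.TTheory GRing.Theory Num.Theory.
Local Open Scope ring_scope.

Lemma sum_pos_ex (I : finType) (w : I -> rat) :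
  0 < \sum_i w i -> exists i, 0 < w i.
Proof.
move=> H; apply: NNPP => Hn.
have : \sum_i w i <= 0.
  apply: sumr_le0 => i _; rewrite leNgt; apply/negP => Hi; apply: Hn; by exists i.
by rewrite leNgt H.
Qed.

Lemma key (I : finType) (a b w : I -> rat) :
  (forall i, 0 <= w i) -> 0 < \sum_i w i ->
  \sum_i w i * a i <= 0 -> \sum_i w i * b i <= 0 ->
  (exists r, a r <= 0 /\ b r <= 0) \/
  (exists p q, [/\ 0 < a p, b p <= 0, 0 < b q, a q <= 0 & a p * b q <= a q * b p]).
Proof.
move=> w0 wpos Sa Sb.
apply: NNPP => Hn.
have H1 : forall r, 0 < a r \/ 0 < b r.
  move=> r; case: (ltP 0 (a r)) => ha; first by left.
  case: (ltP 0 (b r)) => hb; first by right.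
  exfalso; apply: Hn; left; by exists r.
have H2 : forall p q, 0 < a p -> b p <= 0 -> 0 < b q -> a q <= 0 -> a q * b p < a p * b q.
  move=> p q h1 h2 h3 h4; rewrite ltNge; apply/negP => h5; apply: Hn; right.
  by exists p, q; split.
pose K := \big[Num.max/0]_(p | (0 < a p) && (b p <= 0)) (- b p / a p).
pose L := \big[Num.min/(K+2)]_(q | a q < 0) (b q / - a q).
have K0 : 0 <= K by rewrite /K; elim/big_rec: _ => // i x _ hx; rewrite le_max hx orbT.
have KL : K < L.
  rewrite /L; apply: lt_bigmin; first lra.
  move=> q hq; have hbq : 0 < b q by case: (H1 q) => //; lra.
  rewrite /K; apply: bigmax_lt; first by apply: divr_gt0; lra.
  move=> p /andP [hap hbp].
  have := H2 p q hap hbp hbq (ltW hq).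
  have haq : 0 < - a q by lra.
  rewrite ltr_pdivrMr // mulrAC ltr_pdivlMr //; lra.
pose k := (K + L) / 2.
have kpos : 0 <= k by rewrite /k; apply: divr_ge0; lra.
have Hk : forall r, 0 < k * a r + b r.
  move=> r.
  case: (ltgtP 0 (a r)) => har.
  - case: (ltP 0 (b r)) => hbr.
      by apply: ltr_wpDl => //; apply: mulr_ge0 => //; apply: ltW.
    have : - b r / a r <= K by rewrite /K; apply: le_bigmax_cond; rewrite har hbr.
    rewrite ler_pdivrMr // => h.
    have : K * a r < k * a r by rewrite ltr_pM2r // /k; lra.
    lra.
  - have hbr : 0 < b r by case: (H1 r) => //; lra.
    have : L <= b r / - a r by rewrite /L; apply: bigmin_le_cond.
    have haq : 0 < - a r by lra.
    rewrite ler_pdivlMr // => h.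
    have : k * - a r < L * - a r by rewrite ltr_pM2r // /k; lra.
    lra.
  - rewrite -har mulr0 add0r; by case: (H1 r) => //; rewrite -har ltxx.
have [r hr] := sum_pos_ex wpos.
have : 0 < \sum_i w i * (k * a i + b i).
  rewrite (bigD1 r) //=; apply: ltr_wpDr; last by apply: mulr_gt0.
  by apply: sumr_ge0 => i _; apply: mulr_ge0 => //; apply: ltW.
have -> : \sum_i w i * (k * a i + b i) = k * \sum_i w i * a i + \sum_i w i * b i.
  rewrite mulr_sumr -big_split /=; apply: eq_bigr => i _; ring.
have : k * \sum_i w i * a i <= 0 by rewrite mulr_ge0_le0.
lra.
Qed.
Lemma alg (A B C D : rat) : 0 < A -> 0 < B -> 0 < C -> 0 < D -> A < B -> D < C ->
  let E := C*B - A*D in let xp := (C - D)*B/E in let xq := (B - A)*C/E in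
  [/\ 0 <= xp <= 1, 0 <= xq <= 1, xp * A / A + xq * D / C = 1,
      xp * A / B + xq * D / D = 1 &
   forall Y, 0 < Y -> (Y/A - 1) * (Y/D - 1) <= (Y/C - 1)*(Y/B - 1) -> Y <= xp * A + xq * D].
Proof.
move=> hA hB hC hD hAB hDC E xp xq.
have hE : 0 < E.
  rewrite /E subr_gt0; nra.
have nE : E != 0 by rewrite gt_eqF.
have nA : A != 0 by rewrite gt_eqF.
have nB : B != 0 by rewrite gt_eqF.
have nC : C != 0 by rewrite gt_eqF.
have nD : D != 0 by rewrite gt_eqF.
split.
- rewrite /xp divr_ge0 ?mulr_ge0 ?ltW //=; try lra.
  rewrite ltr_pdivrMr // mul1r /E; nra.
- rewrite /xq divr_ge0 ?mulr_ge0 ?ltW //=; try lra.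
  rewrite ltr_pdivrMr // mul1r /E; nra.
- rewrite /xp /xq /E; field; rewrite -/E; by rewrite nE nC nA.
- rewrite /xp /xq /E; field; rewrite -/E; by rewrite nE nB nD.
move=> Y hY H.
have H' : (Y - A) * (Y - D) * (C * B) <= (Y - C) * (Y - B) * (A * D).
  have e1 : (Y/A - 1) * (Y/D - 1) = (Y - A) * (Y - D) * (C * B) / (A*D*C*B) by field; rewrite nA nD nB nC.
  have e2 : (Y/C - 1) * (Y/B - 1) = (Y - C) * (Y - B) * (A * D) / (A*D*C*B) by field; rewrite nA nD nB nC.
  rewrite e1 e2 in H; rewrite -(@ler_pM2r _ ((A*D*C*B)^-1)) //; last by rewrite invr_gt0 !mulr_gt0.
have H2 : E * Y * Y <= (A*B*(C - D) + C*D*(B - A)) * Y.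
  rewrite /E -subr_ge0; rewrite -subr_ge0 in H'.
  have -> : (A * B * (C - D) + C * D * (B - A)) * Y - (C * B - A * D) * Y * Y
    = (Y - C) * (Y - B) * (A * D) - (Y - A) * (Y - D) * (C * B) by ring.
  done.
rewrite ler_pM2r // in H2.
have -> : xp * A + xq * D = (A*B*(C - D) + C*D*(B - A)) / E.
  rewrite /xp /xq; field; by rewrite nE.
by rewrite ler_pdivlMr // mulrC.
Qed.

Lemma sumI1 (I : finType) (p : I) (F : I -> rat) :
  \sum_r (r == p)%:R * F r = F p.
Proof.
rewrite (bigD1 p) //= eqxx mul1r big1 ?addr0 // => r /negPf ->; by rewrite mul0r.
Qed.

Lemma sumI2 (I : finType) (p q : I) (A B : rat) (F : I -> rat) : p != q ->
  \sum_r ((r == p)%:R * A + (r == q)%:R * B) * F r = A * F p + B * F q.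
Proof.
move=> npq.
rewrite -(sumI1 p (fun r => A * F r)) -(sumI1 q (fun r => B * F r)) -big_split /=.
apply: eq_bigr => r _; ring.
Qed.

Definition pok N (l0 l1 : 'I_N -> rat) p q := (l0 p < l1 p) && (l1 q < l0 q).
Definition EE N (l0 l1 : 'I_N -> rat) p q := l0 q * l1 p - l0 p * l1 q.
Definition cand N (l0 l1 : 'I_N -> rat) p q : 'I_N -> rat :=
  if pok l0 l1 p q then
    (fun r => (r == p)%:R * ((l0 q - l1 q) * l1 p / EE l0 l1 p q)
            + (r == q)%:R * ((l1 p - l0 p) * l0 q / EE l0 l1 p q))
  else (fun r => (r == p)%:R).

Lemma pok_neq N (l0 l1 : 'I_N -> rat) p q : pok l0 l1 p q -> p != q.
Proof.
rewrite /pok => /andP [h1 h2]; apply/eqP => e; subst q.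
have := lt_trans h1 h2; by rewrite ltxx.
Qed.

Lemma cand_props N (l0 l1 : 'I_N -> rat)
  (hl0 : forall p, 0 < l0 p) (hl1 : forall p, 0 < l1 p) p q :
  P1d_feasible l0 l1 (cand l0 l1 p q) /\
  (#|[set r : 'I_N | (0 < cand l0 l1 p q r)%R]| <= 2)%N.
Proof.
split; last first.
  apply: (@leq_trans #|[set p; q]|); last by rewrite cards2; case: (p != q).
  apply: subset_leq_card; apply/subsetP => r; rewrite !inE => H.
  apply: NNPP => Hn; move: H; have [e1 e2] : (r == p) = false /\ (r == q) = false.
    by split; apply/negP => e; apply: Hn; rewrite e ?orbT.
  rewrite /cand; case: ifP => _; by rewrite ?e1 ?e2 ?mul0r ?addr0 ltxx.
rewrite /cand /P1d_feasible; case: ifP => hpok.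
- have npq := pok_neq hpok.
  move: hpok; rewrite /pok => /andP [h1 h2].
  have [hxp hxq s1 s2 _] :=
     alg (hl0 p) (hl1 p) (hl0 q) (hl1 q) h1 h2.
  have Cpp : Cp l0 l1 p = l0 p by rewrite /Cp min_l // ltW.
  have Cpq : Cp l0 l1 q = l1 q by rewrite /Cp min_r // ltW.
  split.
  + move=> r; case: (eqVneq r p) => [->|nrp].
      by rewrite (negPf npq) mul1r mul0r addr0 /EE; exact: hxp.
    case: (eqVneq r q) => [_|nrq]; last by rewrite mul0r mul0r addr0 lexx ler01.
    by rewrite mul1r mul0r add0r /EE; exact: hxq.
  + under eq_bigr => r _ do rewrite -mulrA -mulrA.
    rewrite sumI2 // Cpp Cpq !mulrA /EE; by rewrite s1.
  + under eq_bigr => r _ do rewrite -mulrA -mulrA.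
    rewrite sumI2 // Cpp Cpq !mulrA /EE; by rewrite s2.
- have Cp0 : 0 < Cp l0 l1 p by rewrite /Cp lt_min hl0 hl1.
  split.
  + by move=> r; case: (r == p); rewrite ?lexx ?ler01.
  + under eq_bigr => r _ do rewrite -mulrA.
    rewrite sumI1 ler_pdivrMr // mul1r /Cp; by rewrite ge_min lexx.
  + under eq_bigr => r _ do rewrite -mulrA.
    rewrite sumI1 ler_pdivrMr // mul1r /Cp; by rewrite ge_min lexx orbT.
Qed.

Lemma cand_obj N (l0 l1 : 'I_N -> rat) p q :
  P1d_obj l0 l1 (cand l0 l1 p q) =
  if pok l0 l1 p q then
    (l0 q - l1 q) * l1 p / EE l0 l1 p q * Cp l0 l1 p
    + (l1 p - l0 p) * l0 q / EE l0 l1 p q * Cp l0 l1 q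
  else Cp l0 l1 p.
Proof.
rewrite /P1d_obj /cand; case: ifP => h; last exact: sumI1.
by rewrite sumI2 // (pok_neq h).
Qed.

Theorem lemma5 (N : nat) (l0 l1 : 'I_N -> rat)
  (hl0 : forall p, 0 < l0 p) (hl1 : forall p, 0 < l1 p) :
  exists x : 'I_N -> rat,
    P1d_optimal l0 l1 x /\ (#|[set p : 'I_N | (0 < x p)%R]| <= 2)%N.
Proof.
case: N l0 l1 hl0 hl1 => [|n] l0 l1 hl0 hl1.
  exists (fun _ => 0); split; last by rewrite (leq_trans (max_card _)) // card_ord.
  split.
    by rewrite /P1d_feasible !big_ord0; split => // -[].
  by move=> y _; rewrite /P1d_obj !big_ord0.
pose i0 := (@ord0 n, @ord0 n).
pose F := fun i : 'I_n.+1 * 'I_n.+1 => P1d_obj l0 l1 (cand l0 l1 i.1 i.2).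
case: (@arg_maxP _ _ _ i0 xpredT F isT) => [[p q]] _ Hmax.
exists (cand l0 l1 p q); have [Hf Hc] := cand_props hl0 hl1 p q.
split => //; split => // y Hy.
suff [p' [q' H]] : exists p' q', P1d_obj l0 l1 y <= F (p', q').
  apply: le_trans H _; exact: (Hmax (p', q')).
have Cpos : forall r, 0 < Cp l0 l1 r by move=> r; rewrite /Cp lt_min hl0 hl1.
case: Hy => Hy01 S1 S2.
have y0 : forall r, 0 <= y r by move=> r; case/andP: (Hy01 r).
pose w r := y r * Cp l0 l1 r.
pose Y := \sum_r w r.
have w0 : forall r, 0 <= w r by move=> r; rewrite /w mulr_ge0 // ltW.
have HY : P1d_obj l0 l1 y = Y by [].
rewrite HY.
case: (leP Y 0) => hY.
  exists ord0, ord0; apply: (le_trans hY).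
  have [[Hc01 _ _] _] := cand_props hl0 hl1 ord0 ord0.
  rewrite /F /P1d_obj; apply: sumr_ge0 => r _; apply: mulr_ge0; last exact: ltW.
  by case/andP: (Hc01 r).
have := @key _ (fun r => Y / l0 r - 1) (fun r => Y / l1 r - 1) w w0 hY.
have eqa : forall l : 'I_n.+1 -> rat, \sum_r w r * (Y / l r - 1) = Y * (\sum_r y r * Cp l0 l1 r / l r) - Y.
  move=> l; rewrite mulr_sumr /Y -sumrB; apply: eq_bigr => r _; rewrite /w; ring.
rewrite !eqa.
have h1 : Y * (\sum_r y r * Cp l0 l1 r / l0 r) - Y <= 0 by nra.
have h2 : Y * (\sum_r y r * Cp l0 l1 r / l1 r) - Y <= 0 by nra.
move=> /(_ h1 h2) [[r [ha hb]] | [p' [q' [hap hbp hbq haq hdet]]]].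
  exists r, r; rewrite /F cand_obj /=.
  have -> : pok l0 l1 r r = false by apply/negP => /pok_neq; rewrite eqxx.
  rewrite /Cp le_min.
  rewrite subr_le0 ler_pdivrMr // mul1r in ha.
  rewrite subr_le0 ler_pdivrMr // mul1r in hb.
  by rewrite ha hb.
exists p', q'; rewrite /F cand_obj /=.
rewrite subr_gt0 ltr_pdivlMr // mul1r in hap.
rewrite subr_le0 ler_pdivrMr // mul1r in hbp.
rewrite subr_gt0 ltr_pdivlMr // mul1r in hbq.
rewrite subr_le0 ler_pdivrMr // mul1r in haq.
have h1' : l0 p' < l1 p' by apply: lt_le_trans hap hbp.
have h2' : l1 q' < l0 q' by apply: lt_le_trans hbq haq.
have -> : pok l0 l1 p' q' by rewrite /pok h1' h2'.
have Cpp : Cp l0 l1 p' = l0 p' by rewrite /Cp min_l // ltW.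
have Cpq : Cp l0 l1 q' = l1 q' by rewrite /Cp min_r // ltW.
have [_ _ _ _ Hv] := alg (hl0 p') (hl1 p') (hl0 q') (hl1 q') h1' h2'.
rewrite Cpp Cpq /EE; apply: Hv => //.
Qed.
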